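(* Let $n\ge 0$ and let $\delta_B$ be any perfect matching of $\{0,1,\ldots,2n+1\}$. Then the configuration $\delta_B\cup\delta_G$ equals the breakpoint graph $BG(\pi)$ of some signed permutation $\pi$ of $\{1,\dots,n\}$ if and only if the complement configuration $\delta_B\cup\overline{\delta_G}$ is hamiltonian (contains a cycle visiting each of the $2n+2$ vertices exactly once).
   Context: $\delta_G=\{\{2i,2i+1\}:0\le i\le n\}$ and $\overline{\delta_G}=\{\{2i-1,2i\}:1\le i\le n\}\cup\{\{0,2n+1\}\}$; a configuration is a multigraph on $\{0,\dots,2n+1\}$ that is the union of a perfect matching $\delta_B$ with $\delta_G$, and its complement replaces $\delta_G$ by $\overline{\delta_G}$. The breakpoint graph: for a signed permutation $\pi$ of $\{1,\dots,n\}$, let $\pi'$ be the unsigned permutation of $\{1,\dots,2n\}$ obtained by replacing each $\pi_i>0$ by $(2\pi_i-1,2\pi_i)$ and each $\pi_i<0$ by $(2|\pi_i|,2|\pi_i|-1)$, with $\pi'_0=0$, $\pi'_{2n+1}=2n+1$; $BG(\pi)$ is the multigraph on $\{0,\dots,2n+1\}$ with black edges $\{\{\pi'_{2i},\pi'_{2i+1}\}:0\le i\le n\}$ and grey edges $\delta_G$. *)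

(* Defs.v *)
From HB Require Import structures.
From mathcomp Require Import all_boot all_order all_algebra.
Set Implicit Arguments. Unset Strict Implicit. Unset Printing Implicit Defensive.
Import GRing.Theory Num.Theory.

(* Vertex set {0, ..., 2n+1} is 'I_(2n+2) = 'I_(n.*2.+2).
   Edges are 2-element subsets; a (multi)graph on V is given by its edge
   multiplicity function {ffun {set V} -> nat}. *)
Notation V n := ('I_(n.*2.+2)).

Definition edge (n : nat) (a b : nat) : {set V n} := [set inord a; inord b].

Definition deltaG (n : nat) : {set {set V n}} :=
  [set edge n (2 * i) (2 * i + 1) | i : 'I_n.+1].

(* complement: {{2i-1,2i} : 1 <= i <= n} u {{0,2n+1}} ; indexing i = j+1, j < n *)
Definition deltaGbar (n : nat) : {set {set V n}} :=
  [set edge n (2 * j + 1) (2 * j + 2) | j : 'I_n] :|: [set edge n 0 (2 * n + 1)].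

Definition perfect_matching (n : nat) (M : {set {set V n}}) : Prop :=
  (forall e, e \in M -> #|e| = 2) /\
  (forall v : V n, #|[set e in M | v \in e]| = 1).

Definition union_mg (n : nat) (A B : {set {set V n}}) : {ffun {set V n} -> nat} :=
  [ffun e => ((e \in A) : nat) + ((e \in B) : nat)].

Definition configuration (n : nat) (dB : {set {set V n}}) := union_mg dB (deltaG n).
Definition complement_configuration (n : nat) (dB : {set {set V n}}) :=
  union_mg dB (deltaGbar n).

Definition signed_perm (n : nat) (pi : seq int) : Prop :=
  perm_eq (map absz pi) (iota 1 n) /\ all (fun x => x != 0%R) pi.

Definition pi' (n : nat) (pi : seq int) : seq nat :=
  0 :: flatten [seq if (0 < x)%R then [:: 2 * absz x - 1; 2 * absz x]
                     else [:: 2 * absz x; 2 * absz x - 1] | x <- pi]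
    ++ [:: 2 * n + 1].

Definition black_edges (n : nat) (pi : seq int) : {set {set V n}} :=
  [set edge n (nth 0 (pi' n pi) (2 * i)) (nth 0 (pi' n pi) (2 * i + 1)) | i : 'I_n.+1].

Definition BG (n : nat) (pi : seq int) : {ffun {set V n} -> nat} :=
  union_mg (black_edges n pi) (deltaG n).

(* Hamiltonian multigraph: a cyclic ordering s of all vertices such that the
   consecutive pairs (s_k, s_{k+1 mod |V|}) form a sub-multiset of the edges. *)
Definition hamiltonian (T : finType) (G : {ffun {set T} -> nat}) : Prop :=
  exists s : seq T, perm_eq s (enum T) /\
    forall e : {set T},
      count (fun p : T * T => [set p.1; p.2] == e) (zip s (rot 1 s)) <= G e.

(* Main.v *)
Require Import Defs.
From mathcomp Require Import all_boot all_order all_algebra zify.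
Set Implicit Arguments. Unset Strict Implicit. Unset Printing Implicit Defensive.

Definition sc (N k : nat) := if k.+1 < N then k.+1 else 0.

Definition Pr (T : finType) (x0 : T) (t : seq T) (k : nat) : {set T} :=
  [set nth x0 t k; nth x0 t (sc (size t) k)].

Definition PP (T : finType) (x0 : T) (C : {set {set T}}) (t : seq T) :=
  forall k, k < size t -> Pr x0 t k \in C.

Definition muniq (T : finType) (M : {set {set T}}) :=
  forall e f v, e \in M -> f \in M -> v \in e -> v \in f -> e = f.

Lemma nth_inj (T : eqType) (x0 : T) (t : seq T) a b :
  uniq t -> a < size t -> b < size t -> nth x0 t a = nth x0 t b -> a = b.
Proof. by move=> u ha hb /eqP; rewrite nth_uniq // => /eqP. Qed.

Lemma core (T : finType) (A B : {set {set T}}) e f v :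
  muniq A -> muniq B -> e \in A :|: B -> f \in A :|: B -> v \in e -> v \in f ->
  e != f -> (e \in A) = ~~ (e \in B) /\ (f \in A) = ~~ (e \in A).
Proof.
move=> uA uB; rewrite !inE => he hf ve vf nef.
case eA: (e \in A); case eB: (e \in B); case fA: (f \in A); case fB: (f \in B);
  rewrite ?eA ?eB ?fA ?fB /= in he hf *; try done;
  try (by case/negP: nef; apply/eqP; apply: (uA e f v));
  try (by case/negP: nef; apply/eqP; apply: (uB e f v)).
Qed.

Lemma Pr_neq (T : finType) (x0 : T) t k :
  uniq t -> 3 <= size t -> k < size t -> Pr x0 t k != Pr x0 t (sc (size t) k).
Proof.
move=> u h3 hk; apply/negP => /eqP E.
have : nth x0 t k \in Pr x0 t k by rewrite !inE eqxx.
have hs : sc (size t) k < size t by rewrite /sc; case: ifP => //; lia.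
have hs2 : sc (size t) (sc (size t) k) < size t by rewrite /sc; case: ifP => //; lia.
rewrite E !inE => /orP[] /eqP H.
  by move: (nth_inj u hk hs H); rewrite /sc; case: ifP; lia.
move: (nth_inj u hk hs2 H); rewrite /sc; case: (ltnP k.+1 (size t)) => h1 /=.
  by case: (ltnP k.+2 (size t)) => h2 /=; lia.
by case: (ltnP 1 (size t)) => h2 /=; lia.
Qed.

Lemma sc_lt N k : k < N -> sc N k < N.
Proof. by move=> hk; rewrite /sc; case: (ltnP k.+1 N) => //; lia. Qed.

Lemma alt (T : finType) (x0 : T) A B t k :
  muniq A -> muniq B -> uniq t -> 3 <= size t -> PP x0 (A :|: B) t ->
  k < size t ->
  (Pr x0 t k \in A) = ~~ (Pr x0 t k \in B) /\
  (Pr x0 t (sc (size t) k) \in A) = ~~ (Pr x0 t k \in A).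
Proof.
move=> uA uB u h3 hP hk.
apply: (core (v := nth x0 t (sc (size t) k)) uA uB (hP _ hk) (hP _ (sc_lt hk))).
- by rewrite !inE eqxx orbT.
- by rewrite !inE eqxx.
- exact: Pr_neq.
Qed.

Lemma kind (T : finType) (x0 : T) A B t :
  muniq A -> muniq B -> uniq t -> 3 <= size t -> PP x0 (A :|: B) t ->
  forall k, k < size t -> (Pr x0 t k \in A) = (Pr x0 t 0 \in A) (+) odd k.
Proof.
move=> uA uB u h3 hP; elim=> [|k IH] hk; first by rewrite addbF.
have hk' : k < size t by lia.
have [_ E] := alt uA uB u h3 hP hk'.
have -> : k.+1 = sc (size t) k by rewrite /sc hk.
by rewrite E IH // /sc hk /= addbN.
Qed.

Lemma reidx (T : finType) (x0 : T) C t (sg : nat -> nat) :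
  uniq t -> PP x0 C t ->
  (forall k, k < size t -> sg k < size t) ->
  (forall k l, k < size t -> l < size t -> sg k = sg l -> k = l) ->
  (forall k, k < size t -> sg (sc (size t) k) = sc (size t) (sg k) \/
                           sg k = sc (size t) (sg (sc (size t) k))) ->
  let t' := [seq nth x0 t (sg k) | k <- iota 0 (size t)] in
  [/\ uniq t', size t' = size t, PP x0 C t' &
      forall k, k < size t -> nth x0 t' k = nth x0 t (sg k)].
Proof.
move=> u hP hr hi hs t'.
have st : size t' = size t by rewrite size_map size_iota.
have nt : forall k, k < size t -> nth x0 t' k = nth x0 t (sg k).
  by move=> k hk; rewrite (nth_map 0) ?size_iota // nth_iota.
split=> //.
- rewrite map_inj_in_uniq ?iota_uniq // => a b; rewrite !mem_iota /= !add0n => ha hb.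
  by move/(nth_inj u (hr _ ha) (hr _ hb)); apply: hi.
- move=> k; rewrite st => hk.
  rewrite /Pr st !nt ?sc_lt //.
  case: (hs _ hk) => ->.
    exact: (hP _ (hr _ hk)).
  rewrite setUC; exact: (hP _ (hr _ (sc_lt hk))).
Qed.

Lemma zip_rot1 (T : finType) (x0 : T) (s : seq T) :
  zip s (rot 1 s) =
  [seq (nth x0 s k, nth x0 s (sc (size s) k)) | k <- iota 0 (size s)].
Proof.
case: s => [|x u] //.
apply: (@eq_from_nth _ (x0, x0)).
  by rewrite size_zip size_rot minnn size_map size_iota.
rewrite size_zip size_rot minnn => i hi.
rewrite nth_zip ?size_rot // (nth_map 0) ?size_iota // nth_iota // add0n.
rewrite rot1_cons nth_rcons /sc /=.
case: (ltnP i.+1 (size u).+1) => h1; case: (ltnP i (size u)) => h2 //; try lia.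
have -> : i = size u by move: hi => /=; lia.
by rewrite eqxx.
Qed.

Lemma mem_edge n a b (v : V n) : v \in edge n a b -> a < n.*2.+2 -> b < n.*2.+2 ->
  val v = a \/ val v = b.
Proof.
by rewrite !inE => /orP[] /eqP -> ha hb; [left|right]; apply: inordK.
Qed.

Lemma edge_meml n a b (v : V n) : val v = a -> v \in edge n a b.
Proof. by move=> <-; rewrite !inE inord_val eqxx. Qed.
Lemma edge_memr n a b (v : V n) : val v = b -> v \in edge n a b.
Proof. by move=> <-; rewrite !inE inord_val eqxx orbT. Qed.

Lemma edge_val n (x y : V n) : edge n (val x) (val y) = [set x; y].
Proof. by rewrite /edge !inord_val. Qed.

Lemma inG0 n : edge n 0 (2 * n + 1) \in deltaGbar n.
Proof. by rewrite !inE eqxx orbT. Qed.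

Lemma inGj n j : j < n -> edge n (2 * j + 1) (2 * j + 2) \in deltaGbar n.
Proof.
move=> hj; rewrite inE; apply/orP; left.
by apply/imsetP; exists (Ordinal hj).
Qed.

Lemma caseG n e : e \in deltaGbar n ->
  e = edge n 0 (2 * n + 1) \/ exists2 j, j < n & e = edge n (2 * j + 1) (2 * j + 2).
Proof.
rewrite !inE => /orP[/imsetP[j _ ->]|/eqP ->]; last by left.
by right; exists (nat_of_ord j).
Qed.

Lemma muniqG n : muniq (deltaGbar n).
Proof.
move=> e f v /caseG he /caseG hf.
case: he => [->|[j hj ->]]; case: hf => [->|[j' hj' ->]] // => ve vf.
- have := mem_edge ve; have := mem_edge vf; move=> h1 h2.
  have : val v = 0 \/ val v = 2 * n + 1 by apply: h2; lia.
  have : val v = 2 * j' + 1 \/ val v = 2 * j' + 2 by apply: h1; lia.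
  lia.
- have := mem_edge ve; have := mem_edge vf; move=> h1 h2.
  have : val v = 2 * j + 1 \/ val v = 2 * j + 2 by apply: h2; lia.
  have : val v = 0 \/ val v = 2 * n + 1 by apply: h1; lia.
  lia.
- have := mem_edge ve; have := mem_edge vf; move=> h1 h2.
  have : val v = 2 * j + 1 \/ val v = 2 * j + 2 by apply: h2; lia.
  have : val v = 2 * j' + 1 \/ val v = 2 * j' + 2 by apply: h1; lia.
  by move=> ? ?; have -> : j = j' by lia.
Qed.

Lemma muniqD n (dB : {set {set V n}}) : perfect_matching dB -> muniq dB.
Proof.
move=> [_ hv] e f v he hf ve vf.
have /cards1P [x hx] : #|[set e in dB | v \in e]| == 1 by rewrite hv.
have : e \in [set e in dB | v \in e] by rewrite inE he ve.
have : f \in [set e in dB | v \in e] by rewrite inE hf vf.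
by rewrite hx !inE => /eqP -> /eqP ->.
Qed.

Lemma nth_flatten2 (A B : Type) (F : A -> seq B) (l : seq A) i b d x0 :
  (forall x, size (F x) = 2) -> i < size l -> b < 2 ->
  nth d (flatten (map F l)) (2 * i + b) = nth d (F (nth x0 l i)) b.
Proof.
move=> hF; elim: l i => [|x l IH] i //= hi hb.
rewrite nth_cat hF; case: i hi => [|i] hi.
  by rewrite muln0 add0n hb.
have -> : 2 * i.+1 + b < 2 = false by lia.
have -> : 2 * i.+1 + b - 2 = 2 * i + b by lia.
by rewrite IH.
Qed.

Lemma flatten_iota m k : 0 < m ->
  flatten [seq [:: 2 * a - 1; 2 * a] | a <- iota m k] = iota (2 * m - 1) (2 * k).
Proof.
elim: k m => [|k IH] m hm //=.
rewrite IH; last by lia.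
have -> : (k + 1 * k.+1)%coq_nat = (2 * k).+1 by lia.
rewrite /=; congr (_ :: _ :: _); first lia.
congr iota; lia.
Qed.

Lemma count_split (F : pred nat) m :
  count F (iota 0 (2 * m)) =
  count (fun i => F (2 * i)) (iota 0 m) + count (fun i => F (2 * i + 1)) (iota 0 m).
Proof.
elim: m => [|m IH] //.
have -> : 2 * m.+1 = 2 * m + 2 by lia.
rewrite iotaD -[m.+1]addn1 iotaD !count_cat IH /= !add0n !addn0.
have -> : (2 * m).+1 = 2 * m + 1 by lia.
lia.
Qed.

Lemma count_le1 (F : pred nat) m (b : bool) :
  (forall i j, i < m -> j < m -> F i -> F j -> i = j) ->
  (forall i, i < m -> F i -> b) -> count F (iota 0 m) <= b.
Proof.
elim: m => [|m IH] hu hb //.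
rewrite -addn1 iotaD count_cat /= addn0 add0n.
case Fm: (F m) => /=.
  have -> : count F (iota 0 m) = 0.
    apply/eqP; rewrite -leqn0 leqNgt -has_count; apply/hasP => -[i].
    rewrite mem_iota add0n /= => hi Fi.
    by have := hu i m; rewrite Fi Fm => /(_ _ _ isT isT); lia.
  by rewrite (hb m) //.
rewrite addn0; apply: IH.
  by move=> i j hi hj; apply: hu; lia.
by move=> i hi; apply: hb; lia.
Qed.

Lemma Pinj (T : finType) (x0 : T) t a b : uniq t -> a < size t -> b < size t ->
  Pr x0 t a = Pr x0 t b -> a = b \/ a = sc (size t) b.
Proof.
move=> u ha hb E.
have : nth x0 t a \in Pr x0 t b by rewrite -E !inE eqxx.
rewrite !inE => /orP[] /eqP H.
  by left; apply: (nth_inj u ha hb H).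
by right; apply: (nth_inj u ha (sc_lt hb) H).
Qed.

Definition Fb (x : int) : seq nat :=
  if (0 < x)%R then [:: 2 * absz x - 1; 2 * absz x] else [:: 2 * absz x; 2 * absz x - 1].

Lemma perm_blocks (l : seq int) :
  perm_eq (flatten (map Fb l)) (flatten [seq [:: 2 * a - 1; 2 * a] | a <- map absz l]).
Proof.
elim: l => [|x l IH] //.
rewrite [map _ (x :: l)]/= [flatten (_ :: _)]/=.
change (perm_eq (Fb x ++ flatten (map Fb l))
  ([:: 2 * absz x - 1; 2 * absz x] ++ flatten [seq [:: 2 * a - 1; 2 * a] | a <- map absz l])).
apply: perm_cat => //.
rewrite /Fb; case: ifP => _ //; by apply/permP => q /=; rewrite addnCA.
Qed.

Lemma forward n (dB : {set {set V n}}) pi : signed_perm n pi ->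
  dB = black_edges n pi -> hamiltonian (complement_configuration dB).
Proof.
move=> [hp hnz] hdB.
have sz : size pi = n by rewrite -(size_map absz) (perm_size hp) size_iota.
have ep : pi' n pi = 0 :: flatten (map Fb pi) ++ [:: 2 * n + 1] by [].
have pf : perm_eq (flatten (map Fb pi)) (iota 1 (2 * n)).
  apply: (perm_trans (perm_blocks pi)).
  have -> : iota 1 (2 * n) = flatten [seq [:: 2 * a - 1; 2 * a] | a <- iota 1 n].
    by rewrite flatten_iota.
  by apply: perm_flatten; apply: perm_map.
have szL : size (flatten (map Fb pi)) = 2 * n by rewrite (perm_size pf) size_iota.
have pp : perm_eq (pi' n pi) (iota 0 (n.*2.+2)).
  rewrite ep; have -> : n.*2.+2 = (2 * n + 1).+1 by lia.
  rewrite /= (iotaD 1 (2 * n) 1) perm_cons add1n.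
  by rewrite /= addn1 perm_cat2r.
have up : uniq (pi' n pi) by rewrite (perm_uniq pp) iota_uniq.
have lt : forall x, x \in pi' n pi -> x < n.*2.+2.
  by move=> x; rewrite (perm_mem pp) mem_iota.
have szp : size (pi' n pi) = n.*2.+2 by rewrite (perm_size pp) size_iota.
pose s : seq (V n) := map (@inord (n.*2.+1)) (pi' n pi).
have ss : size s = n.*2.+2 by rewrite size_map.
have us : uniq s.
  rewrite map_inj_in_uniq // => x y hx hy /(congr1 val) /=.
  by rewrite !inordK // ?lt.
have ns : forall k, k < n.*2.+2 -> nth ord0 s k = inord (nth 0 (pi' n pi) k).
  by move=> k hk; rewrite (nth_map 0) ?szp.
have hps : perm_eq s (enum (V n)).
  apply: uniq_perm => //; first exact: enum_uniq.
  move=> v; rewrite mem_enum; apply/mapP; exists (val v); last by rewrite inord_val.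
  by rewrite (perm_mem pp) mem_iota /=.
clearbody s.
exists s; split => //.
move=> e; rewrite /complement_configuration /union_mg ffunE.
rewrite (zip_rot1 ord0) count_map.
have -> : iota 0 (size s) = iota 0 (2 * n.+1) by rewrite ss; congr iota; lia.
rewrite count_split; apply: leq_add; apply: count_le1 => /=.
- move=> i j hi hj /eqP E1 /eqP E2.
  have E : Pr ord0 s (2 * i) = Pr ord0 s (2 * j) by rewrite /Pr E1 E2.
  case: (Pinj us _ _ E); rewrite ?ss; try lia.
  by rewrite /sc; case: (ltnP (2 * j).+1 n.*2.+2) => ?; lia.
- move=> i hi /eqP <-.
  have -> : sc (size s) (2 * i) = 2 * i + 1 by rewrite /sc ss; case: ltnP => ?; lia.
  rewrite !ns; try lia.
  rewrite hdB; apply/imsetP; exists (Ordinal hi) => //.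
- move=> i j hi hj /eqP E1 /eqP E2.
  have E : Pr ord0 s (2 * i + 1) = Pr ord0 s (2 * j + 1) by rewrite /Pr E1 E2.
  case: (Pinj us _ _ E); rewrite ?ss; try lia.
  by rewrite /sc; case: (ltnP (2 * j + 1).+1 n.*2.+2) => ?; lia.
- move=> i hi /eqP <-.
  have n1 : nth 0 (pi' n pi) (2 * n + 1) = 2 * n + 1.
    by rewrite ep addn1 /= nth_cat szL ltnn subnn.
  case: (ltnP i n) => hin.
  + have -> : sc (size s) (2 * i + 1) = 2 * i + 2 by rewrite /sc ss; case: ltnP => ?; lia.
    rewrite !ns; try lia.
    have -> : 2 * i + 2 = (2 * i + 1).+1 by lia.
    rewrite ep (addn1 (2 * i)) /= !nth_cat szL.
    have -> : 2 * i < 2 * n by lia.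
    have -> : (2 * i).+1 < 2 * n by lia.
    rewrite -(addn1 (2 * i)).
    have hF2 : forall x, size (Fb x) = 2 by move=> x; rewrite /Fb; case: ifP.
    have e0 : nth 0 (flatten (map Fb pi)) (2 * i) = nth 0 (Fb (nth 0%R pi i)) 0.
      by rewrite -(@nth_flatten2 _ _ Fb pi i 0 0 0%R) ?sz ?addn0.
    have e1 : nth 0 (flatten (map Fb pi)) (2 * i + 1) = nth 0 (Fb (nth 0%R pi i)) 1.
      by rewrite -(@nth_flatten2 _ _ Fb pi i 1 0 0%R) ?sz.
    rewrite e0 e1.
    set x := nth 0%R pi i.
    have : absz x \in iota 1 n.
      by rewrite -(perm_mem hp); apply: map_f; rewrite mem_nth ?sz.
    rewrite mem_iota => /andP[ha1 ha2].
    rewrite /Fb; case: ifP => _ /=; last rewrite setUC;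
    (have -> : 2 * absz x - 1 = 2 * (absz x - 1) + 1 by lia);
    (have -> : 2 * absz x = 2 * (absz x - 1) + 2 by lia);
    apply: inGj; lia.
  + have -> : i = n by lia.
    have -> : sc (size s) (2 * n + 1) = 0 by rewrite /sc ss; case: ltnP => ?; lia.
    rewrite !ns; try lia.
    by rewrite n1 /= setUC inG0.
Qed.

Ltac destr := repeat match goal with
 | |- context [if ?x < ?y then _ else _] =>
     lazymatch x with context [if _ then _ else _] => fail | _ =>
     lazymatch y with context [if _ then _ else _] => fail | _ =>
     case: (ltnP x y) => ? end end
 end.

Definition rsg N p k := if p + k < N then p + k else p + k - N.
Definition vsg N k := if 0 < k then N - k else 0.

Lemma rsg_r N p k : p < N -> k < N -> rsg N p k < N.
Proof. by move=> hp hk; rewrite /rsg; destr; lia. Qed.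
Lemma rsg_i N p k l : p < N -> k < N -> l < N -> rsg N p k = rsg N p l -> k = l.
Proof. by move=> hp hk hl; rewrite /rsg; destr; lia. Qed.
Lemma rsg_c N p k : p < N -> k < N -> rsg N p (sc N k) = sc N (rsg N p k) \/
                           rsg N p k = sc N (rsg N p (sc N k)).
Proof. by move=> hp hk; rewrite /rsg /sc; destr; lia. Qed.
Lemma vsg_r N k : k < N -> vsg N k < N.
Proof. by move=> hk; rewrite /vsg; destr; lia. Qed.
Lemma vsg_i N k l : k < N -> l < N -> vsg N k = vsg N l -> k = l.
Proof. by move=> hk hl; rewrite /vsg; destr; lia. Qed.
Lemma vsg_c N k : 2 < N -> k < N -> vsg N (sc N k) = sc N (vsg N k) \/
                           vsg N k = sc N (vsg N (sc N k)).
Proof. by move=> h hk; rewrite /vsg /sc; destr; lia. Qed.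

Lemma zw n (t : seq (V n)) a b : uniq t -> a < size t -> b < size t -> a != b ->
  nth ord0 t a = ord0 -> [set nth ord0 t a; nth ord0 t b] \in deltaGbar n ->
  nth ord0 t b = ord_max.
Proof.
move=> u ha hb nab hz hG.
have z0 : (ord0 : V n) \in edge n 0 (2 * n + 1) by apply: edge_meml.
have hzin : (ord0 : V n) \in [set nth ord0 t a; nth ord0 t b] by rewrite hz !inE eqxx.
have E := muniqG hG (inG0 n) hzin z0.
have : nth ord0 t b \in edge n 0 (2 * n + 1) by rewrite -E !inE eqxx orbT.
move=> /mem_edge [] //; try lia.
  move=> h; have : nth ord0 t b = nth ord0 t a by rewrite hz; apply: val_inj.
  by move/(nth_inj u hb ha) => e; rewrite e eqxx in nab.
by move=> h; apply: val_inj => /=; rewrite h; lia.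
Qed.

Lemma orient n (dB : {set {set V n}}) s : perfect_matching dB -> 0 < n ->
  uniq s -> size s = n.*2.+2 -> PP ord0 (dB :|: deltaGbar n) s ->
  exists t : seq (V n), [/\ uniq t, size t = n.*2.+2, PP ord0 (dB :|: deltaGbar n) t,
     nth ord0 t 0 = ord0 & nth ord0 t (n.*2.+1) = ord_max].
Proof.
move=> pm hn us ss hP.
have uA := muniqD pm; have uB : muniq (deltaGbar n) := @muniqG n.
have hz : (ord0 : V n) \in s.
  have hsz : size (enum (V n)) <= size s by rewrite size_enum_ord ss.
  have [_ ->] := uniq_min_size us (fun x _ => mem_enum _ x) hsz.
  by rewrite mem_enum.
set p := index ord0 s.
have hp : p < n.*2.+2 by rewrite -ss index_mem.
pose sg1 := rsg (size s) p.
have hp' : p < size s by rewrite ss.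
have := reidx us hP (fun k => rsg_r hp') (fun k l => rsg_i hp') (fun k => rsg_c hp'); move=> /=.
move: (map _ _) => t1 [u1 s1 P1 n1].
rewrite ss in s1 n1.
have t10 : nth ord0 t1 0 = ord0 by rewrite n1 // /rsg addn0 hp nth_index.
case E: (nth ord0 t1 (n.*2.+1) == ord_max).
  by exists t1; split => //; apply/eqP.
have h3 : 3 <= size t1 by lia.
have hN : n.*2.+1 < size t1 by lia.
have scN : sc (size t1) (n.*2.+1) = 0 by rewrite /sc s1 ltnn.
have sc0 : sc (size t1) 0 = 1 by rewrite /sc s1.
have nG : Pr ord0 t1 (n.*2.+1) \notin deltaGbar n.
  apply/negP => hG; move/negbT: E => /eqP; apply.
  apply: (zw (a := 0) u1) => //; [ by rewrite s1 | by move: hG; rewrite /Pr scN setUC].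
have [ex al] := alt uA uB u1 h3 P1 hN.
have inD : Pr ord0 t1 (n.*2.+1) \in dB.
  by move: (P1 _ hN); rewrite inE (negbTE nG) orbF.
rewrite inD scN in al.
have inG : Pr ord0 t1 0 \in deltaGbar n.
  by move: (P1 0 (ltn_trans (ltn0Sn _) hN)); rewrite inE al.
have t11 : nth ord0 t1 1 = ord_max.
  apply: (zw (a := 0) u1) => //; [ by rewrite s1 | by rewrite s1 | by move: inG; rewrite /Pr sc0].
have h2 : 2 < size t1 by [].
have := reidx u1 P1 (fun k => @vsg_r _ k) (fun k l => @vsg_i _ k l) (fun k => vsg_c h2); move=> /=.
move: (map _ _) => t2 [u2 s2 P2 n2].
rewrite s1 in s2 n2.
exists t2; split => //.
  by rewrite n2.
by rewrite n2 // /vsg /= subSnn.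
Qed.

Import GRing.Theory Num.Theory.

Ltac clean := repeat match goal with
 | H : ?T |- _ => lazymatch T with
     | is_true (_ <= _) => fail | @eq nat _ _ => fail | _ \/ _ => fail
     | (_ <= _) = _ => fail | _ = (_ <= _) => fail | nat => fail
     | _ => clear H end
 end.
Ltac slia := clean; lia.

Lemma flatten_h (h : nat -> nat) m k :
  flatten [seq [:: h (2 * i + 1); h (2 * i + 2)] | i <- iota m k] =
  map h (iota (2 * m + 1) (2 * k)).
Proof.
elim: k m => [|k IH] m //=.
rewrite IH (_ : (k + 1 * k.+1)%coq_nat = (2 * k).+1); last by lia.
rewrite /=; congr (_ :: _ :: _); first (congr h; lia).
congr map; congr iota; lia.
Qed.

Lemma odd21 j : odd (2 * j + 1). Proof. by rewrite oddD oddM. Qed.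
Lemma odd22 j : odd (2 * j + 2) = false. Proof. by rewrite oddD oddM. Qed.

Lemma sc_small N k : k.+1 < N -> sc N k = k.+1.
Proof. by rewrite /sc => ->. Qed.

Definition pif (h : nat -> nat) (i : nat) : int :=
  if odd (h (2 * i + 1)) then Posz ((h (2 * i + 1)).+1 %/ 2)
  else (- Posz ((h (2 * i + 1)).+1 %/ 2))%R.

Lemma Fb_pif (h : nat -> nat) i j :
  (h (2 * i + 1) = 2 * j + 1 /\ h (2 * i + 2) = 2 * j + 2) \/
  (h (2 * i + 1) = 2 * j + 2 /\ h (2 * i + 2) = 2 * j + 1) ->
  Fb (pif h i) = [:: h (2 * i + 1); h (2 * i + 2)].
Proof.
rewrite /pif /Fb; case=> [[-> ->]|[-> ->]].
  rewrite odd21 (_ : (2 * j + 1).+1 %/ 2 = j.+1); last by lia.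
  by rewrite ltz_nat /=; congr (_ :: _ :: _); lia.
rewrite odd22 (_ : (2 * j + 2).+1 %/ 2 = j.+1); last by lia.
by rewrite oppr_gt0 ltz_nat /=; try (congr (_ :: _ :: _); lia).
Qed.

Lemma build n (dB : {set {set V n}}) t : perfect_matching dB -> 0 < n ->
  uniq t -> size t = n.*2.+2 -> PP ord0 (dB :|: deltaGbar n) t ->
  nth ord0 t 0 = ord0 -> nth ord0 t (n.*2.+1) = ord_max ->
  exists pi, signed_perm n pi /\ dB = black_edges n pi.
Proof.
move=> pm hn u st hP t0 tN.
have uA := muniqD pm; have uB : muniq (deltaGbar n) := @muniqG n.
have h3 : 3 <= size t by rewrite st; slia.
pose h k := val (nth ord0 t k).
have hinj : forall a b, a < n.*2.+2 -> b < n.*2.+2 -> h a = h b -> a = b.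
  by move=> a b ha hb /val_inj; apply: nth_inj; rewrite ?st.
have h0 : h 0 = 0 by rewrite /h t0.
have hN : h (n.*2.+1) = 2 * n + 1 by rewrite /h tN /=; slia.
have hNt : n.*2.+1 < size t by rewrite st.
have GN : Pr ord0 t (n.*2.+1) \in deltaGbar n.
  rewrite /Pr (_ : sc _ _ = 0); last by rewrite /sc st ltnn.
  rewrite setUC (_ : [set _; _] = edge n 0 (2 * n + 1)) ?inG0 //.
  rewrite /edge; congr [set _; _]; apply: val_inj; rewrite /= inordK //=; try slia.
have [exN _] := alt uA uB u h3 hP hNt.
have k0 := kind uA uB u h3 hP hNt.
rewrite exN GN /= odd_double /= in k0.
have P0 : Pr ord0 t 0 \in dB by move: k0; case: (Pr ord0 t 0 \in dB).
have hkD : forall k, k < n.*2.+2 -> (Pr ord0 t k \in dB) = ~~ odd k.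
  by move=> k hk; rewrite (kind uA uB u h3 hP) ?st // P0.
have hkG : forall k, k < n.*2.+2 -> (Pr ord0 t k \in deltaGbar n) = odd k.
  move=> k hk; have hk' : k < size t by rewrite st.
  have [ex _] := alt uA uB u h3 hP hk'.
  by move: ex; rewrite hkD // => /negbRL; rewrite negbK => <-.
have Q : forall i, i < n -> exists2 j, j < n &
    (h (2 * i + 1) = 2 * j + 1 /\ h (2 * i + 2) = 2 * j + 2) \/
    (h (2 * i + 1) = 2 * j + 2 /\ h (2 * i + 2) = 2 * j + 1).
  move=> i hi.
  have hi' : 2 * i + 1 < n.*2.+2 by slia.
  have hG := hkG _ hi'; rewrite odd21 in hG.
  have sc' : sc (size t) (2 * i + 1) = 2 * i + 2 by rewrite sc_small ?st; slia.
  have ne : h (2 * i + 1) <> h (2 * i + 2) by move/hinj => H; have := H _ _; slia.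
  move: hG; rewrite /Pr sc' => /caseG [E|[j hj E]].
    have : nth ord0 t (2 * i + 1) \in edge n 0 (2 * n + 1) by rewrite -E !inE eqxx.
    move/mem_edge => /(_ _ _) [] //; try slia; rewrite -/(h _) => E'.
      by have := hinj (2 * i + 1) 0; rewrite E' h0 => /(_ _ _ erefl); slia.
    by have := hinj (2 * i + 1) (n.*2.+1); rewrite E' hN => /(_ _ _ erefl); slia.
  have : nth ord0 t (2 * i + 1) \in edge n (2 * j + 1) (2 * j + 2) by rewrite -E !inE eqxx.
  have : nth ord0 t (2 * i + 2) \in edge n (2 * j + 1) (2 * j + 2) by rewrite -E !inE eqxx orbT.
  move=> /mem_edge /(_ _ _) H1 /mem_edge /(_ _ _) H2.
  exists j => //; rewrite /h; move: ne H1 H2; rewrite /h; slia.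
pose pi := [seq pif h i | i <- iota 0 n].
have epi : pi' n pi = map h (iota 0 n.*2.+2).
  have -> : pi' n pi = 0 :: flatten (map Fb pi) ++ [:: 2 * n + 1] by [].
  have -> : map Fb pi = [seq [:: h (2 * i + 1); h (2 * i + 2)] | i <- iota 0 n].
    rewrite -map_comp; apply/eq_in_map => i; rewrite mem_iota => /andP[_ hi] /=.
    by have [j _ H] := Q i hi; apply: Fb_pif H.
  rewrite flatten_h.
  have -> : n.*2.+2 = (2 * n + 1).+1 by slia.
  by rewrite /= (iotaD 1 (2 * n) 1) map_cat h0 /= muln0 add0n (_ : 1 + 2 * n = n.*2.+1) ?hN //; slia.
have absp : map absz pi = [seq (h (2 * i + 1)).+1 %/ 2 | i <- iota 0 n].
  rewrite -map_comp; apply/eq_map => i /=; rewrite /pif; case: ifP => _ //=.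
  by rewrite abszN.
exists pi; split; first split.
- have us1 : uniq (map absz pi).
    rewrite absp map_inj_in_uniq ?iota_uniq // => a b.
    rewrite !mem_iota => /andP[_ ha] /andP[_ hb] E.
    have [ja hja Ha] := Q a ha; have [jb hjb Hb] := Q b hb.
    have : h (2 * a + 1) = h (2 * b + 1) \/ h (2 * a + 1) = h (2 * b + 2).
      by move: E Ha Hb; slia.
    case=> /hinj H; have := H _ _; slia.
  have ss1 : {subset map absz pi <= iota 1 n}.
    move=> x; rewrite absp => /mapP [i]; rewrite mem_iota => /andP[_ hi] ->.
    rewrite mem_iota; have [j hj Hj] := Q i hi; move: Hj; slia.
  have sz1 : size (iota 1 n) <= size (map absz pi) by rewrite !size_map !size_iota.
  have [_ me] := uniq_min_size us1 ss1 sz1.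
  by apply: uniq_perm => //; apply: iota_uniq.
- apply/allP => x /mapP [i]; rewrite mem_iota => /andP[_ hi] ->.
  have [j hj Hj] := Q i hi.
  have mp : 0 < (h (2 * i + 1)).+1 %/ 2 by move: Hj; slia.
  rewrite /pif; case: ifP => _; rewrite ?oppr_eq0 //; apply/eqP => -[]; slia.
have hPr : forall i : 'I_n.+1, edge n (nth 0 (pi' n pi) (2 * i)) (nth 0 (pi' n pi) (2 * i + 1))
    = Pr ord0 t (2 * i).
  move=> i; have hi := ltn_ord i.
  rewrite epi !(nth_map 0) ?size_iota; try slia.
  rewrite !nth_iota; try slia.
  rewrite !add0n /h edge_val /Pr sc_small ?st; last by slia.
  by rewrite addn1.
apply/setP => e; apply/idP/imsetP.
- move=> he.
  have /set0Pn [v ve] : e != set0.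
    by rewrite -card_gt0 (pm.1 e he).
  have hsz : size (enum (V n)) <= size t by rewrite size_enum_ord st.
  have [_ me] := uniq_min_size u (fun x _ => mem_enum _ x) hsz.
  have vt : v \in t by rewrite me mem_enum.
  set m := index v t.
  have hm : m < n.*2.+2 by rewrite -st index_mem.
  have hi : m %/ 2 < n.+1 by slia.
  exists (Ordinal hi) => //.
  rewrite hPr /=; apply: (uA _ _ v he _ ve).
    by rewrite hkD /=; [rewrite oddM | slia].
  have : m = 2 * (m %/ 2) \/ m = 2 * (m %/ 2) + 1 by slia.
  rewrite /Pr sc_small ?st; last by slia.
  rewrite -(nth_index ord0 vt) -/m.
  by case=> {1}->; rewrite ?addn1 !inE eqxx ?orbT.
- move=> [i _ ->]; rewrite hPr hkD /=; first by rewrite oddM.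
  by have := ltn_ord i; slia.
Qed.

Lemma n0case (dB : {set {set V 0}}) : perfect_matching dB -> dB = black_edges 0 [::].
Proof.
move=> pm.
have full : forall e : {set V 0}, #|e| = 2 -> e = setT.
  by move=> e he; apply/eqP; rewrite eqEcard subsetT cardsT card_ord he.
have ne : (inord 0 : V 0) != inord 1 by apply/eqP => /(congr1 val); rewrite /= !inordK.
have eT : edge 0 0 1 = setT by apply: full; rewrite cards2 ne.
have [e0 he0] : exists e0, e0 \in dB.
  have : 0 < #|[set e in dB | (ord0 : V 0) \in e]| by rewrite pm.2.
  by rewrite card_gt0 => /set0Pn [e]; rewrite inE => /andP[he _]; exists e.
have e0T : e0 = setT by apply: full; apply: pm.1.
apply/setP => e; apply/idP/imsetP.
  move=> he; exists ord0 => //=; rewrite eT; apply: full; exact: pm.1.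
by move=> [i _ ->]; rewrite (ord1 i) /= eT -e0T.
Qed.

Theorem mainTheorem2 (n : nat) (dB : {set {set 'I_(n.*2.+2)}}) :
  perfect_matching dB ->
  ((exists pi : seq int, signed_perm n pi /\ configuration dB = BG n pi) <->
   hamiltonian (complement_configuration dB)).
Proof.
move=> pm; split.
- move=> [pi [sp hc]]; apply: (forward sp).
  apply/setP => e; have := congr1 (fun f : {ffun {set V n} -> nat} => f e) hc; rewrite /= !ffunE.
  by case: (e \in dB); case: (e \in black_edges n pi); case: (e \in deltaG n).
- move=> hH; case: (posnP n) => [n0|hn].
    subst n; exists [::]; split; first by split.
    by rewrite /configuration /BG {1}(n0case pm).
  move: hH => [s [hps hc]].
  have us : uniq s by rewrite (perm_uniq hps) enum_uniq.
  have ss : size s = n.*2.+2 by rewrite (perm_size hps) size_enum_ord.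
  have hP : PP ord0 (dB :|: deltaGbar n) s.
    move=> k hk; have := hc (Pr ord0 s k).
    rewrite /complement_configuration /union_mg ffunE (zip_rot1 ord0) count_map.
    have cpos : 0 < count (preim (fun k => (nth ord0 s k, nth ord0 s (sc (size s) k)))
        (fun p : V n * V n => [set p.1; p.2] == Pr ord0 s k)) (iota 0 (size s)).
      rewrite -has_count; apply/hasP; exists k; first by rewrite mem_iota.
      exact/eqP.
    move=> H; rewrite inE; move: (leq_trans cpos H).
    by case: (_ \in dB); case: (_ \in deltaGbar n).
  have [t [ut st Pt t0 tN]] := orient pm hn us ss hP.
  have [pi [sp hb]] := build pm hn ut st Pt t0 tN.
  exists pi; split => //.
  by rewrite /configuration /BG {1}hb.
Qed.
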